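(* For every Motzkin tree $T$ and every $m\in\mathbb{N}$, the following are equivalent: 1. there exists exactly one labeled Motzkin tree $t$ such that $\mathrm{skeleton}(t)=T$ and $t$ is $m$-open; 2. $\mathrm{ucs1\_aux}(T,m)$ holds.
   Context: Motzkin trees are the terms generated by a leaf $v$, a unary constructor $l$ and a binary constructor $a$. Labeled Motzkin trees are terms generated by $t ::= \mathrm{var}(i) \mid \mathrm{lam}(t) \mid \mathrm{app}(t,t)$ with $i\in\mathbb{N}$; they represent $\lambda$-terms in de Bruijn form. The skeleton function is defined by $\mathrm{skeleton}(\mathrm{var}(i))=v$, $\mathrm{skeleton}(\mathrm{lam}(t))=l(\mathrm{skeleton}(t))$, and $\mathrm{skeleton}(\mathrm{app}(t_1,t_2))=a(\mathrm{skeleton}(t_1),\mathrm{skeleton}(t_2))$. For $m\in\mathbb{N}$, ''$t$ is $m$-open'' is defined recursively: - $\mathrm{var}(i)$ is $m$-open iff $i<m$; - $\mathrm{lam}(t)$ is $m$-open iff $t$ is $(m+1)$-open; - $\mathrm{app}(t_1,t_2)$ is $m$-open iff both $t_1$ and $t_2$ are $m$-open. The predicate $\mathrm{ucs1\_aux}(T,m)$ holds iff, for every leaf of $T$, $m$ plus the number of unary nodes on the path from the root of $T$ to that leaf equals $1$. *)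

(* Defs.v *)
From Stdlib Require Import Arith.

Inductive motzkin : Type :=
| v : motzkin
| l : motzkin -> motzkin
| a : motzkin -> motzkin -> motzkin.

(* Labeled Motzkin trees (lambda terms in de Bruijn form). *)
Inductive lmotzkin : Type :=
| var : nat -> lmotzkin
| lam : lmotzkin -> lmotzkin
| app : lmotzkin -> lmotzkin -> lmotzkin.

Fixpoint skeleton (t : lmotzkin) : motzkin :=
  match t with
  | var _ => v
  | lam t' => l (skeleton t')
  | app t1 t2 => a (skeleton t1) (skeleton t2)
  end.

Fixpoint m_open (m : nat) (t : lmotzkin) : Prop :=
  match t with
  | var i => i < m
  | lam t' => m_open (S m) t'
  | app t1 t2 => m_open m t1 /\ m_open m t2
  end.

(* ucs1_aux T m : for every leaf of T, m plus the number of unary nodes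
   on the path from the root to that leaf equals 1.  Written recursively:
   descending through a unary node increments the counter. *)
Fixpoint ucs1_aux (T : motzkin) (m : nat) : Prop :=
  match T with
  | v => m = 1
  | l T' => ucs1_aux T' (S m)
  | a T1 T2 => ucs1_aux T1 m /\ ucs1_aux T2 m
  end.

(* Main.v *)
Require Import Defs.
From Stdlib Require Import Arith Lia.

Theorem mainTheorem5 (T : motzkin) (m : nat) :
  (exists t : lmotzkin,
      (skeleton t = T /\ m_open m t) /\
      (forall t' : lmotzkin, skeleton t' = T /\ m_open m t' -> t' = t))
  <-> ucs1_aux T m.
Proof.
  revert m; induction T as [|T IH|T1 IH1 T2 IH2]; intro m; split.
  - intros [t [[Hs Ho] Hu]]. destruct t; simpl in *; try discriminate.
    destruct m as [|[|m]]; [inversion Ho|reflexivity|].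
    assert (H0 : var 0 = var n) by (apply Hu; simpl; split; [reflexivity|lia]).
    assert (H1 : var 1 = var n) by (apply Hu; simpl; split; [reflexivity|lia]).
    rewrite <- H1 in H0; discriminate.
  - simpl; intros ->. exists (var 0). split; [simpl; split; auto|].
    intros [i| |] [Hs Ho]; simpl in *; try discriminate. f_equal; lia.
  - intros [t [[Hs Ho] Hu]]. destruct t; simpl in *; try discriminate.
    injection Hs as Hs. apply IH. exists t. split; [auto|].
    intros t' [Hs' Ho']. assert (E := Hu (lam t') (conj (f_equal l Hs') Ho')).
    injection E; auto.
  - simpl; intro H. apply IH in H. destruct H as [t [[Hs Ho] Hu]].
    exists (lam t). split; [simpl; split; [f_equal; auto|auto]|].
    intros [i|t'|t1 t2] [Hs' Ho']; simpl in *; try discriminate.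
    injection Hs' as Hs'. f_equal. auto.
  - intros [t [[Hs Ho] Hu]]. destruct t as [|t|t1 t2]; simpl in *; try discriminate.
    injection Hs as Hs1 Hs2. destruct Ho as [Ho1 Ho2]. split.
    + apply IH1. exists t1. split; [auto|].
      intros t' [Hs' Ho']. assert (E := Hu (app t' t2)).
      simpl in E. rewrite Hs', Hs2 in E. specialize (E (conj eq_refl (conj Ho' Ho2))).
      injection E; auto.
    + apply IH2. exists t2. split; [auto|].
      intros t' [Hs' Ho']. assert (E := Hu (app t1 t')).
      simpl in E. rewrite Hs', Hs1 in E. specialize (E (conj eq_refl (conj Ho1 Ho'))).
      injection E; auto.
  - simpl; intros [H1 H2]. apply IH1 in H1. apply IH2 in H2.
    destruct H1 as [t1 [[Hs1 Ho1] Hu1]]. destruct H2 as [t2 [[Hs2 Ho2] Hu2]].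
    exists (app t1 t2). split; [simpl; split; [f_equal; auto|auto]|].
    intros [i|t'|u1 u2] [Hs' Ho']; simpl in *; try discriminate.
    injection Hs' as E1 E2. destruct Ho'. f_equal; auto.
Qed.
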